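(* Consider the Postdoc secretary problem with $n$ candidates in which, if the candidate accepted at the $k$-th interview is the overall second best candidate, the payoff is $1-k/n$, and otherwise (including accepting nobody) the payoff is $0$. Then there exist integers $0\le r(n)\le s(n)\le n$ such that the following strategy maximizes the expected payoff among all strategies: reject the first $r(n)$ interviewed candidates; for interviews $k$ with $r(n)<k\le s(n)$, accept the first candidate which is better than all the preceding ones; after the $s(n)$-th interview, accept the first candidate which is either the best or the second best among the candidates interviewed so far.
   Context: Setting (secretary-type problem): $n$ candidates have distinct qualities (a strict total order) and are interviewed one at a time in uniformly random order (all $n!$ orders equally likely). After the $k$-th interview, the interviewer knows only the relative ranks of the first $k$ candidates among themselves and must immediately and irrevocably either accept the $k$-th candidate (stopping the process) or reject it; rejected candidates cannot be recalled. A strategy is a rule making this decision at each step using only the relative ranks observed so far (it may accept nobody). *)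

(* Defs.v *)
From mathcomp Require Import all_boot all_order all_algebra all_fingroup.
Set Implicit Arguments. Unset Strict Implicit. Unset Printing Implicit Defensive.
Import Order.TTheory GRing.Theory Num.Theory.

(* An interview order is a permutation p : 'S_n ; p i is the overall rank
   (0 = best, 1 = second best, ...) of the candidate interviewed at
   (0-based) position i.  All n! orders are equally likely. *)

Definition relrank (n : nat) (p : 'S_n) (i : 'I_n) : nat :=
  #|[set j : 'I_n | (j < i)%N && (p j < p i)%N]|.

Definition hist (n : nat) (p : 'S_n) (k : nat) : seq nat :=
  [seq relrank p i | i <- [seq i : 'I_n <- enum 'I_n | (i < k)%N]].

(* A (deterministic) strategy: given the history of relative ranks after
   the k-th interview (a list of length k), decide whether to accept the
   k-th candidate.  The process stops at the first acceptance. *)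
Definition strategy := seq nat -> bool.

Definition payoff (n : nat) (S : strategy) (p : 'S_n) : rat :=
  match [pick i : 'I_n | S (hist p i.+1) &&
                         [forall j : 'I_n, (j < i)%N ==> ~~ S (hist p j.+1)]] with
  | Some i => if (p i == 1 :> nat) then 1 - (i.+1)%:R / n%:R else 0
  | None => 0
  end%R.

Definition expected_payoff (n : nat) (S : strategy) : rat :=
  ((\sum_(p : 'S_n) payoff S p) / (n`!)%:R)%R.

Definition threshold_strategy (r s : nat) : strategy :=
  fun h => let k := size h in let x := last 0%N h in
    ((r < k <= s)%N && (x == 0%N)) || ((s < k)%N && (x <= 1)%N).

(* Main.v *)
Require Import Defs.
From mathcomp Require Import all_boot all_order all_algebra all_fingroup.
From mathcomp Require Import zify ring lra.
Import Order.TTheory GRing.Theory Num.Theory.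
Set Implicit Arguments. Unset Strict Implicit. Unset Printing Implicit Defensive.

Section Comb.
Variable n : nat.
Implicit Types (p q : 'S_n).

Definition rr p (i : nat) : nat :=
  if (insub i : option 'I_n) is Some o then relrank p o else 0.
Definition pv p (i : nat) : nat :=
  if (insub i : option 'I_n) is Some o then (p o : nat) else 0.

Lemma rrE p (o : 'I_n) : rr p o = relrank p o.
Proof. by rewrite /rr valK. Qed.
Lemma pvE p (o : 'I_n) : pv p o = p o.
Proof. by rewrite /pv valK. Qed.

Lemma card_lt (m : nat) : m <= n -> #|[set v : 'I_n | v < m]| = m.
Proof.
elim: m => [|m IH] Hm.
  by apply/eqP; rewrite cards_eq0; apply/eqP/setP => v; rewrite !inE.
have Hm' : m < n by [].
have -> : [set v : 'I_n | v < m.+1] = Ordinal Hm' |: [set v : 'I_n | v < m].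
  apply/setP => v; rewrite !inE ltnS leq_eqVlt; congr (_ || _).
rewrite cardsU1 IH ?(ltnW Hm) // inE /= ltnn.
by rewrite add1n.
Qed.

Lemma filter_iota_lt k m : [seq i <- iota 0 m | i < k] = iota 0 (minn k m).
Proof.
elim: m => [|m IH]; first by rewrite minn0.
rewrite -addn1 iotaD filter_cat IH add0n /=.
case: (ltnP m k) => H.
  by rewrite (minn_idPr (_ : m + 1 <= k)) ?addn1 // -addn1 iotaD.
by rewrite cats0 (minn_idPl (_ : k <= m + 1)) // addn1; apply: leqW.
Qed.

Lemma histE p k : hist p k = map (rr p) (iota 0 (minn k n)).
Proof.
rewrite /hist.
have -> : [seq relrank p i | i <- [seq i : 'I_n <- enum 'I_n | (i < k)%N]] =
          map (rr p) (map (@nat_of_ord n) [seq i : 'I_n <- enum 'I_n | (i < k)%N]).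
  by rewrite -map_comp; apply: eq_map => o /=; rewrite rrE.
congr (map _ _).
by rewrite -(filter_map _ (fun i : nat => i < k)) val_enum_ord filter_iota_lt.
Qed.

Lemma hist0 p : hist p 0 = [::].
Proof. by rewrite histE min0n. Qed.

Lemma histS p k : k < n -> hist p k.+1 = rcons (hist p k) (rr p k).
Proof.
move=> Hk; rewrite !histE (minn_idPl (ltnW Hk)) (minn_idPl Hk).
by rewrite -addn1 iotaD map_cat cats1.
Qed.

Lemma size_hist p k : k <= n -> size (hist p k) = k.
Proof. by move=> Hk; rewrite histE size_map size_iota (minn_idPl Hk). Qed.

Lemma nth_hist p k j : j < k -> k <= n -> nth 0 (hist p k) j = rr p j.
Proof.
move=> Hj Hk; rewrite histE (minn_idPl Hk) (nth_map 0) ?size_iota //.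
by rewrite nth_iota.
Qed.

Lemma relrank_le p (o : 'I_n) : relrank p o <= o.
Proof.
rewrite /relrank -[X in _ <= X]card_lt; last exact: ltnW.
by apply: subset_leq_card; apply/subsetP => v; rewrite !inE => /andP[].
Qed.

Lemma rr_le p k : rr p k <= k.
Proof.
rewrite /rr; case: insubP => [o _ <-|_] //; exact: relrank_le.
Qed.

End Comb.

Definition rk (h : seq nat) (j : nat) : nat :=
  foldl (fun x y => x + (y <= x)) (nth 0 h j) (drop j.+1 h).

Lemma rk_rcons h y j : j < size h -> rk (rcons h y) j = rk h j + (y <= rk h j).
Proof. by move=> Hj; rewrite /rk nth_rcons Hj drop_rcons // foldl_rcons. Qed.

Lemma rk_last h y : rk (rcons h y) (size h) = y.
Proof.
rewrite /rk nth_rcons ltnn eqxx drop_oversize //.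
by rewrite size_rcons.
Qed.

Section Comb2.
Variable n : nat.
Implicit Types (p q : 'S_n).

Definition cnt p k j := #|[set l : 'I_n | (l < k) && (p l < pv p j)]|.

Lemma cnt_base p j : j < n -> cnt p j.+1 j = rr p j.
Proof.
move=> Hj; have -> : j = Ordinal Hj by [].
rewrite /cnt rrE pvE /relrank. apply: eq_card => l; rewrite !inE.
rewrite ltnS leq_eqVlt; case: eqP => //= E.
have -> : l = Ordinal Hj by apply: val_inj.
by rewrite /= !ltnn.
Qed.

Lemma cnt_step p k j : j < k -> k < n ->
  cnt p k.+1 j = cnt p k j + (rr p k <= cnt p k j).
Proof.
move=> Hjk Hk; have Hj : j < n by apply: ltn_trans Hk.
have -> : k = Ordinal Hk by [].
have -> : j = Ordinal Hj by [].
set ok := Ordinal Hk; set oj := Ordinal Hj.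
rewrite rrE /cnt /relrank !pvE.
set A := [set l : 'I_n | (l < ok) && (p l < p oj)].
have Hne : p ok != p oj.
  apply/eqP => /perm_inj E; move: Hjk; rewrite -[k]/(val ok) E /=; by rewrite ltnn.
have -> : [set l : 'I_n | (l < ok.+1) && (p l < p oj)] =
          if p ok < p oj then ok |: A else A.
  apply/setP => l; rewrite !inE ltnS leq_eqVlt.
  case: (eqVneq l ok) => [->|Hl] /=.
    by case: ifP => H; rewrite ?inE ?eqxx //= ltnn.
  have Hl' : (val l == val ok) = false by apply/negbTE.
  by rewrite Hl'; case: ifP => _; rewrite ?inE ?(negbTE Hl).
have HA : ok \notin A by rewrite inE ltnn.
case: ltnP => H.
  rewrite cardsU1 HA add1n.
  suff -> : #|[set l : 'I_n | (l < ok) && (p l < p ok)]| <= #|A| by rewrite addn1.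
  apply: subset_leq_card; apply/subsetP => l; rewrite !inE => /andP[-> H2] /=.
  exact: ltn_trans H2 H.
have H' : p oj < p ok by rewrite ltn_neqAle H andbT eq_sym.
suff : #|A| < #|[set l : 'I_n | (l < ok) && (p l < p ok)]|.
  by rewrite ltnNge => /negbTE ->; rewrite addn0.
apply: proper_card; apply/properP; split.
  apply/subsetP => l; rewrite !inE => /andP[-> H2] /=.
  exact: ltn_trans H2 H'.
exists oj; first by rewrite inE Hjk H'.
by rewrite inE ltnn andbF.
Qed.

Lemma cnt_rk p j k : j < k -> k <= n -> cnt p k j = rk (hist p k) j.
Proof.
elim: k => [//|k IH] Hjk Hk.
have Hk' : k < n by [].
rewrite histS //.
move: Hjk; rewrite ltnS leq_eqVlt => /orP[/eqP Ej|Hjk].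
  subst j; have := rk_last (hist p k) (rr p k).
  rewrite size_hist ?(ltnW Hk') // => ->.
  exact: cnt_base.
rewrite rk_rcons ?size_hist ?(ltnW Hk') // -IH // ?(ltnW Hk') //.
exact: cnt_step.
Qed.

Lemma cnt_full p j : j < n -> cnt p n j = pv p j.
Proof.
move=> Hj; have -> : j = Ordinal Hj by [].
rewrite /cnt pvE.
have -> : [set l : 'I_n | (l < n) && (p l < p (Ordinal Hj))] =
          p @^-1: [set v : 'I_n | v < p (Ordinal Hj)].
  by apply/setP => l; rewrite !inE ltn_ord.
by rewrite card_preimset ?card_lt //; [apply: ltnW | apply: perm_inj].
Qed.

Lemma pv_rk p j : j < n -> pv p j = rk (hist p n) j.
Proof. by move=> Hj; rewrite -cnt_full // cnt_rk. Qed.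

Lemma hist_inj p q : hist p n = hist q n -> p = q.
Proof.
move=> E; apply/permP => o; apply: val_inj => /=.
have Hp := pvE p o; have Hq := pvE q o.
by rewrite -Hp -Hq !pv_rk // E.
Qed.

End Comb2.

Fixpoint codes (k : nat) : seq (seq nat) :=
  if k is k'.+1 then [seq rcons h y | h <- codes k', y <- iota 0 k'.+1]
  else [:: [::]].

Lemma codes_size k h : h \in codes k -> size h = k.
Proof.
elim: k h => [|k IH] h; first by rewrite inE => /eqP ->.
move=> Hin; have [[h' y] /= [/IH Hh _ ->]] := allpairsP Hin.
by rewrite size_rcons Hh.
Qed.

Lemma codes_rcons k h y : h \in codes k -> y <= k -> rcons h y \in codes k.+1.
Proof.
move=> Hh Hy; apply: (@allpairs_f _ _ _ (fun h y => rcons h y)) => //.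
by rewrite mem_iota add0n ltnS Hy.
Qed.

Lemma uniq_codes k : uniq (codes k).
Proof.
elim: k => [//|k IH].
apply: (@allpairs_uniq _ _ _ (fun h y => rcons h y)) => //; first exact: iota_uniq.
by move=> [h1 y1] [h2 y2] _ _ /= /rcons_inj.
Qed.

Lemma size_codes k : size (codes k) = k`!.
Proof.
elim: k => [//|k IH].
by rewrite (size_allpairs (fun h y => rcons h y)) IH size_iota factS mulnC.
Qed.

Lemma sum_eq_count (T : eqType) (s : seq T) (x : T) :
  \sum_(h <- s) (x == h : nat) = count_mem x s.
Proof.
elim: s => [|a s IH]; first by rewrite big_nil.
by rewrite big_cons IH /= eq_sym.
Qed.

Section Comb3.
Variable n : nat.
Implicit Types (p q : 'S_n).

Lemma hist_codes p k : k <= n -> hist p k \in codes k.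
Proof.
elim: k => [|k IH] Hk; first by rewrite hist0 inE.
rewrite histS //; apply: codes_rcons; first exact: IH (ltnW Hk).
exact: rr_le.
Qed.

Definition hcount (h : seq nat) : nat := \sum_(p : 'S_n) (hist p n == h : nat).

Lemma hcount_le1 h : hcount h <= 1.
Proof.
rewrite /hcount; case: (pickP (fun p : 'S_n => hist p n == h)) => [p0 /eqP H0|H].
  rewrite (bigD1 p0) //= H0 eqxx big1 // => p Hp.
  apply/eqP; rewrite eqb0; apply/eqP => E; move/eqP: Hp; apply.
  exact: hist_inj (etrans E (esym H0)).
by rewrite big1 // => p _; rewrite H.
Qed.

Lemma sum_hcount : \sum_(h <- codes n) hcount h = n`!.
Proof.
rewrite /hcount exchange_big /=.
rewrite (eq_bigr (fun _ => 1)) => [|p _].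
  by rewrite sum1_card card_Sn.
by rewrite sum_eq_count count_uniq_mem ?uniq_codes ?hist_codes.
Qed.

Lemma hist_exists h : h \in codes n -> exists p, hist p n = h.
Proof.
move=> Hh.
case: (pickP (fun p : 'S_n => hist p n == h)) => [p0 /eqP H0|H]; first by exists p0.
exfalso.
have H0 : hcount h = 0 by rewrite /hcount big1 // => p _; rewrite H.
have := sum_hcount; rewrite (bigD1_seq h) ?uniq_codes //= H0 add0n.
have : \sum_(i <- codes n | i != h) hcount i <= \sum_(i <- codes n | i != h) 1.
  by apply: leq_sum => i _; apply: hcount_le1.
rewrite sum1_count => Hle Heq.
have Hc : count (predC1 h) (codes n) = (size (codes n)).-1.
  have := count_predC (pred1 h) (codes n).
  rewrite count_uniq_mem ?uniq_codes // Hh add1n => <-.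
  by [].
move: Hle; rewrite Heq Hc size_codes.
have := fact_gt0 n; lia.
Qed.

End Comb3.

Local Open Scope ring_scope.
Lemma natr_andb (a b : bool) : ((a && b)%:R : rat) = (a%:R * b%:R)%R.
Proof. by case: a; case: b; rewrite ?mul1r ?mul0r. Qed.

Section Dyn.
Variable n : nat.
Local Open Scope ring_scope.
Implicit Types (p : 'S_n).

Lemma partition (F : 'S_n -> rat) h k : (k < n)%N ->
  \sum_(p : 'S_n) (hist p k == h)%:R * F p =
  \sum_(y < k.+1) \sum_(p : 'S_n) (hist p k.+1 == rcons h y)%:R * F p.
Proof.
move=> Hk; rewrite exchange_big /=; apply: eq_bigr => p _.
rewrite -big_distrl /=; congr (_ * _).
rewrite histS // (eq_bigr (fun y : 'I_k.+1 => ((hist p k == h) && (rr p k == y))%:R));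
  last by move=> y _; rewrite eqseq_rcons.
have Hr : (rr p k < k.+1)%N by rewrite ltnS rr_le.
rewrite (bigD1 (Ordinal Hr)) //= eqxx andbT big1 ?addr0 // => y Hy.
case: (hist p k == h) => //=.
have -> : (rr p k == y) = (Ordinal Hr == y) by [].
by rewrite eq_sym (negbTE Hy).
Qed.

Fixpoint Nd (d k x : nat) : rat :=
  if d is d'.+1 then \sum_(y < k.+1) Nd d' k.+1 (x + (y <= x))%N
  else (x == 1)%N%:R.

Lemma C2 d : forall k h j, (k + d = n)%N -> h \in codes k -> (j < k)%N ->
  \sum_(p : 'S_n) ((hist p k == h) && (pv p j == 1%N))%:R = Nd d k (rk h j).
Proof.
elim: d => [|d IH] k h j Hkd Hh Hj.
  rewrite addn0 in Hkd; subst k.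
  have [p0 Hp0] := hist_exists Hh.
  rewrite (bigD1 p0) //= Hp0 eqxx /= big1 ?addr0.
    by rewrite pv_rk // Hp0.
  move=> p Hp; have -> : (hist p n == h) = false.
    apply/negbTE/eqP => E; move/eqP: Hp; apply; apply: hist_inj.
    by rewrite E Hp0.
  by [].
have Hk : (k < n)%N by lia.
rewrite (eq_bigr (fun p => (hist p k == h)%:R * (pv p j == 1%N)%:R)) => [|p _];
  last by rewrite natr_andb.
rewrite partition //=; apply: eq_bigr => y _.
have Hs := codes_size Hh.
rewrite -rk_rcons ?Hs // -(IH k.+1 (rcons h y) j) ?addSnnS //.
- by apply: eq_bigr => p _; rewrite natr_andb.
- by apply: codes_rcons => //; rewrite -ltnS.
- exact: ltn_trans Hj _.
Qed.

Definition rew p (m : nat) : rat :=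
  if pv p m == 1%N then 1 - m.+1%:R / n%:R else 0.

Fixpoint pf (S : strategy) p (d m : nat) : rat :=
  if d is d'.+1 then (if S (hist p m.+1) then rew p m else pf S p d' m.+1) else 0.

Lemma payoff_pf S p : payoff S p = pf S p n 0.
Proof.
rewrite /payoff; case: pickP => [i /andP [Hi /forallP Hfirst] | Hnone].
  have key : forall d m, (m + d = n)%N -> (m <= i)%N -> pf S p d m = rew p i.
    elim=> [|d IH] m Hmd Hmi; first by have := ltn_ord i; lia.
    rewrite /=; case: (ltngtP m i) => [Hlt|Hgt|Heq].
    - have Hm : (m < n)%N by apply: ltn_trans Hlt (ltn_ord i).
      have /implyP H := Hfirst (Ordinal Hm); have /negbTE -> := H Hlt.
      by apply: IH; lia.
    - by move: Hmi; rewrite leqNgt Hgt.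
    - by rewrite Heq Hi.
  by rewrite key // /rew pvE.
have Hno : forall m, (m < n)%N -> ~~ S (hist p m.+1).
  move=> m; elim: m {-2}m (leqnn m) => [|M IHM] m Hm Hmn.
    move: Hm; rewrite leqn0 => /eqP Em; subst m.
    apply/negP => HS; have := Hnone (Ordinal Hmn); rewrite /= HS /=.
    by move/negbT/negP; apply; apply/forallP.
  apply/negP => HS; have := Hnone (Ordinal Hmn); rewrite /= HS /=.
  move/negbT/negP; apply; apply/forallP => j; apply/implyP => Hj.
  apply: IHM; [lia | exact: ltn_trans Hj Hmn].
have key : forall d m, (m + d = n)%N -> pf S p d m = 0.
  elim=> [//|d IH] m Hmd /=.
  rewrite (negbTE (Hno m _)); last by lia.
  by apply: IH; lia.
by rewrite key.
Qed.

Definition Rw (k y : nat) : rat := Nd (n - k) k y * (1 - k%:R / n%:R).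

Fixpoint W (S : strategy) (d : nat) (h : seq nat) : rat :=
  if d is d'.+1 then
    \sum_(y < (size h).+1)
       (if S (rcons h y) then Rw (size h).+1 y else W S d' (rcons h y))
  else 0.

Lemma B1 S d : forall m h, (m + d = n)%N -> h \in codes m ->
  \sum_(p : 'S_n) (hist p m == h)%:R * pf S p d m = W S d h.
Proof.
elim: d => [|d IH] m h Hmd Hh.
  by rewrite big1 // => p _; rewrite mulr0.
have Hm : (m < n)%N by lia.
have Hs := codes_size Hh.
rewrite partition //= Hs; apply: eq_bigr => y _.
rewrite (eq_bigr (fun p => (hist p m.+1 == rcons h y)%:R *
          (if S (rcons h y) then rew p m else pf S p d m.+1))); last first.
  move=> p _; case E: (hist p m.+1 == rcons h y); last by rewrite !mul0r.
  by move/eqP: E => E; rewrite /= E.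
case: (S (rcons h y)); last first.
  apply: IH; first by lia.
  by apply: codes_rcons => //; rewrite -ltnS.
rewrite /Rw /rew.
rewrite (eq_bigr (fun p => ((hist p m.+1 == rcons h y) && (pv p m == 1%N))%:R *
           (1 - m.+1%:R / n%:R))); last first.
  by move=> p _; rewrite natr_andb; case: (pv p m == 1%N); rewrite ?mulr1 ?mulr0 ?mul1r ?mul0r.
rewrite -big_distrl /= (@C2 d) //.
- have := rk_last h y; rewrite Hs => ->; congr (Nd _ _ _ * _); lia.
- by lia.
- by apply: codes_rcons => //; rewrite -ltnS.
Qed.

End Dyn.

Local Open Scope ring_scope.

Section Val.
Variable n : nat.

Fixpoint V (d m : nat) : rat :=
  if d is d'.+1 then \sum_(y < m.+1) Num.max (Rw n m.+1 y) (V d' m.+1) else 0.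

Lemma W_le_V S d : forall h, W n S d h <= V d (size h).
Proof.
elim: d => [//|d IH] h /=; apply: ler_sum => y _.
case: (S (rcons h y)); first by rewrite le_max lexx.
have := IH (rcons h y); rewrite size_rcons => H.
by rewrite le_max H orbT.
Qed.

Definition tdec (r s k y : nat) : bool :=
  ((r < k <= s)%N && (y == 0%N)) || ((s < k)%N && (y <= 1)%N).

Definition SC (r s : nat) := forall k y : nat, (1 <= k <= n)%N -> (y < k)%N ->
  if tdec r s k y then V (n - k) k <= Rw n k y else Rw n k y <= V (n - k) k.

Lemma W_T r s : SC r s -> forall d h, (size h + d = n)%N ->
  W n (threshold_strategy r s) d h = V d (size h).
Proof.
move=> Hsc; elim=> [//|d IH] h Hd /=.
apply: eq_bigr => y _.
have -> : threshold_strategy r s (rcons h y) = tdec r s (size h).+1 y.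
  by rewrite /threshold_strategy size_rcons last_rcons.
have := Hsc (size h).+1 y; rewrite ltn_ord.
have -> : (n - (size h).+1)%N = d by lia.
move=> /(_ _ isT).
have -> : (1 <= (size h).+1 <= n)%N = true by apply/andP; split => //; lia.
move=> /(_ isT).
case: tdec => H; first by rewrite max_l.
by rewrite IH ?size_rcons ?max_r //; lia.
Qed.

Lemma expected_W S : expected_payoff n S = W n S n [::] / (n`!)%:R.
Proof.
rewrite /expected_payoff; congr (_ / _).
rewrite -(@B1 n S n 0 [::]) ?inE //.
by apply: eq_bigr => p _; rewrite hist0 eqxx mul1r payoff_pf.
Qed.

Lemma main_from_SC r s : SC r s -> forall S : strategy,
  expected_payoff n S <= expected_payoff n (threshold_strategy r s).
Proof.
move=> Hsc S; rewrite !expected_W; apply: ler_wpM2r.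
  by rewrite invr_ge0 ler0n.
by rewrite (@W_T r s Hsc n [::]) //; apply: (W_le_V S n [::]).
Qed.

End Val.

Local Open Scope ring_scope.

Lemma mx1 (u : rat) : u <= Num.max u 0.
Proof. by rewrite le_max lexx. Qed.
Lemma mx2 (u : rat) : 0 <= Num.max u 0.
Proof. by rewrite le_max lexx orbT. Qed.

Lemma threshold (P : nat -> bool) n :
  (forall k, (1 <= k)%N -> (k < n)%N -> P k -> P k.+1) ->
  exists r, (r <= n)%N /\ forall k, (1 <= k <= n)%N -> P k = (r < k)%N.
Proof.
elim: n => [|n IH] Hup.
  by exists 0%N; split => // k /andP[H1 H2]; lia.
have [r [Hr Hk]] : exists r, (r <= n)%N /\ forall k, (1 <= k <= n)%N -> P k = (r < k)%N.
  by apply: IH => k H1 H2; apply: Hup => //; lia.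
case HP: (P n.+1).
  exists r; split; first by lia.
  move=> k /andP[H1 H2]; move: H2; rewrite leq_eqVlt => /orP[/eqP ->|H2].
    by rewrite HP; apply/esym; lia.
  by apply: Hk; apply/andP; split => //.
exists n.+1; split => // k /andP[H1 H2].
rewrite ltnNge H2 /=; apply/negbTE/negP => Pk.
move: H2; rewrite leq_eqVlt => /orP[/eqP Ek|H2]; first by move: HP; rewrite -Ek Pk.
have Hkn : (k <= n)%N by [].
have : P n.
  rewrite Hk; last by apply/andP; split => //; lia.
  have := Hk k; rewrite H1 Hkn Pk => /(_ isT) => /esym; lia.
by move/(Hup n) => H; move: HP; rewrite H //; lia.
Qed.

Section Abstract.
Variables (n K0 Kb : nat) (a b U v : nat -> rat).
Hypothesis rec : forall k, (2 <= k <= n)%N ->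
  v k.-1 = v k + (Num.max (a k - v k) 0 + Num.max (b k - v k) 0) / k%:R.
Hypothesis vn : v n = 0.
Hypothesis HK0 : (1 <= K0)%N.
Hypothesis HKb : (K0 <= Kb)%N.
Hypothesis Ha1 : forall j, (1 <= j)%N -> (j < K0)%N -> a j <= a j.+1.
Hypothesis Hb1 : forall j, (1 <= j)%N -> (j < Kb)%N -> b j <= b j.+1.
Hypothesis Ha2 : forall k, (K0 <= k <= n)%N -> U k <= a k.
Hypothesis Hb2 : forall k, (Kb <= k <= n)%N -> U k <= b k.
Hypothesis Hsup : forall k, (K0 < k <= n)%N ->
  U k + (Num.max (a k - U k) 0 + Num.max (b k - U k) 0) / k%:R <= U k.-1.
Hypothesis Un : 0 <= U n.
Hypothesis Hab : forall k, (1 <= k)%N -> (k < K0)%N -> b k <= a k.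

Lemma phi_mono k x y : (2 <= k)%N -> x <= y ->
  x + (Num.max (a k - x) 0 + Num.max (b k - x) 0) / k%:R <=
  y + (Num.max (a k - y) 0 + Num.max (b k - y) 0) / k%:R.
Proof.
move=> Hk Hxy.
have m1 : Num.max (a k - x) 0 <= Num.max (a k - y) 0 + (y - x).
  rewrite ge_max; apply/andP; split.
    by have := mx1 (a k - y); lra.
  by have := mx2 (a k - y); lra.
have m2 : Num.max (b k - x) 0 <= Num.max (b k - y) 0 + (y - x).
  rewrite ge_max; apply/andP; split.
    by have := mx1 (b k - y); lra.
  by have := mx2 (b k - y); lra.
have HK : (2 : rat) <= k%:R by rewrite (ler_nat _ 2 k).
have HK0' : (k%:R : rat) != 0 by rewrite pnatr_eq0; lia.
set X := (Num.max (a k - x) 0 + Num.max (b k - x) 0) / k%:R.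
set Y := (Num.max (a k - y) 0 + Num.max (b k - y) 0) / k%:R.
have EX : X * k%:R = Num.max (a k - x) 0 + Num.max (b k - x) 0 by rewrite divfK.
have EY : Y * k%:R = Num.max (a k - y) 0 + Num.max (b k - y) 0 by rewrite divfK.
nra.
Qed.

Lemma v_le_U : forall k, (K0 <= k <= n)%N -> v k <= U k.
Proof.
have : forall i, (i <= n - K0)%N -> v (n - i) <= U (n - i).
  elim=> [|i IH] Hi; first by rewrite subn0 vn.
  have Hk : (2 <= n - i <= n)%N by lia.
  have -> : (n - i.+1)%N = (n - i).-1 by lia.
  rewrite rec //; apply: le_trans (Hsup _); last by lia.
  apply: phi_mono; first by lia.
  by apply: IH; lia.
move=> H k Hk; have := H (n - k)%N; rewrite (_ : (n - (n - k))%N = k); last by lia.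
by apply; lia.
Qed.

Lemma v_mono k : (2 <= k <= n)%N -> v k <= v k.-1.
Proof.
move=> Hk; rewrite rec // lerDl; apply: divr_ge0; last by rewrite ler0n.
by apply: addr_ge0; apply: mx2.
Qed.

Definition Pa k := v k <= a k.
Definition Pb k := v k <= b k.

Lemma Pa_up k : (1 <= k)%N -> (k < n)%N -> Pa k -> Pa k.+1.
Proof.
rewrite /Pa => H1 H2 Hp; case: (leqP K0 k) => HK.
  apply: le_trans (Ha2 _); first by apply: v_le_U; lia.
  by lia.
apply: le_trans (Ha1 H1 HK); apply: le_trans Hp.
by apply: (v_mono (k := k.+1)); lia.
Qed.

Lemma Pb_up k : (1 <= k)%N -> (k < n)%N -> Pb k -> Pb k.+1.
Proof.
rewrite /Pb => H1 H2 Hp; case: (leqP Kb k) => HK.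
  apply: le_trans (Hb2 _); first by apply: v_le_U; lia.
  by lia.
apply: le_trans (Hb1 H1 HK); apply: le_trans Hp.
by apply: (v_mono (k := k.+1)); lia.
Qed.

Lemma Pb_Pa k : (1 <= k <= n)%N -> Pb k -> Pa k.
Proof.
rewrite /Pa /Pb => Hk Hb; case: (leqP K0 k) => HK.
  by apply: le_trans (Ha2 _); [apply: v_le_U|]; lia.
apply: le_trans Hb _; apply: Hab => //; lia.
Qed.

Theorem partA : exists r s, (r <= s <= n)%N /\ forall k, (1 <= k <= n)%N ->
  [/\ ((r < k)%N -> v k <= a k), ((k <= r)%N -> a k <= v k),
      ((s < k)%N -> v k <= b k) & ((k <= s)%N -> b k <= v k)].
Proof.
have [r [Hr Er]] := @threshold Pa n Pa_up.
have [s [Hs Es]] := @threshold Pb n Pb_up.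
have Hrs : (r <= s)%N.
  rewrite leqNgt; apply/negP => Hsr.
  have Hk : (1 <= r <= n)%N by apply/andP; split => //; lia.
  have := Er r Hk; rewrite ltnn; move/negbT/negP; apply.
  by apply: Pb_Pa => //; rewrite Es.
exists r, s; split; first by rewrite Hrs.
move=> k Hk; split.
- by move=> H; have := Er k Hk; rewrite H.
- move=> H; have := Er k Hk; rewrite ltnNge H /= /Pa => /negbT.
  by rewrite -ltNge => /ltW.
- by move=> H; have := Es k Hk; rewrite H.
- move=> H; have := Es k Hk; rewrite ltnNge H /= /Pb => /negbT.
  by rewrite -ltNge => /ltW.
Qed.

End Abstract.

Local Open Scope ring_scope.


Lemma predn_R (k : nat) : (1 <= k)%N -> ((k.-1)%:R : rat) = k%:R - 1.
Proof. by case: k => //= k _; rewrite -addn1 natrD addrK. Qed.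

Lemma max_split (x y : rat) : Num.max x y = y + Num.max (x - y) 0.
Proof.
rewrite !maxEle; case: (lerP x y) => H; case: (lerP (x - y) 0) => H'; lra.
Qed.

Section Spec.
Variable n : nat.
Hypothesis Hn : (2 <= n)%N.

Local Notation N := (n%:R : rat).
Lemma N_gt1 : 1 < N.
Proof. by rewrite (ltr_nat _ 1 n). Qed.

Definition fr (k : nat) : rat := (n`!)%:R / (k`!)%:R.
Lemma fr_gt0 k : 0 < fr k.
Proof. by rewrite /fr divr_gt0 // ltr0n fact_gt0. Qed.
Lemma frS k : fr k = k.+1%:R * fr k.+1.
Proof.
rewrite /fr factS natrM.
have h1 : (k`!%:R : rat) != 0 by rewrite pnatr_eq0 -lt0n fact_gt0.
have h2 : (k.+1%:R : rat) != 0 by rewrite pnatr_eq0.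
by field; rewrite h1 nat1r pnatr_eq0.
Qed.

Lemma Nd_ge2 d k x : (2 <= x)%N -> Nd d k x = 0.
Proof.
elim: d k x => [|d IH] k x Hx /=.
  by have -> : (x == 1)%N = false by apply/eqP; lia.
by rewrite big1 // => y _; apply: IH; lia.
Qed.

Lemma Nd_cl d : forall k, (k + d = n)%N ->
  Nd d k 0 = fr k * (k%:R * (N - k%:R) / (N * (N - 1))) /\
  Nd d k 1 = fr k * (k%:R * (k%:R - 1) / (N * (N - 1))).
Proof.
have HN := N_gt1.
have HN0 : N != 0 by apply/eqP; lra.
have HN1 : N - 1 != 0 by apply/eqP; lra.
elim: d => [|d IH] k Hk.
  rewrite addn0 in Hk; subst k; rewrite /= /fr subrr mulr0 mul0r mulr0.
  split => //; rewrite divff ?pnatr_eq0 -?lt0n ?fact_gt0 // mul1r.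
  by rewrite divff // mulf_neq0.
have [IH0 IH1] := IH k.+1 (etrans (addSnnS k d) Hk).
split.
  rewrite /= big_ord_recl /= IH1.
  rewrite (eq_bigr (fun _ => Nd d k.+1 0)) => [|i _]; last first.
    by congr Nd; rewrite /bump /=; lia.
  rewrite sumr_const card_ord IH0 (frS k) -mulr_natl.
  rewrite -addn1 natrD; field; apply/andP; split => //.
have [->|Hk0] := eqVneq k 0%N.
  by rewrite /= big_ord1 Nd_ge2 // (_ : (0%:R : rat) = 0) // !mul0r mulr0.
case: k Hk Hk0 IH0 IH1 => [//|k] Hk _ IH0 IH1.
rewrite /= big_ord_recl big_ord_recl /= [Nd d k.+2 (1 + 1)%N]Nd_ge2 // !add0r addn0 sumr_const card_ord IH1 (frS k.+1).
have E1 : (k.+1%:R : rat) = k%:R + 1 by rewrite -addn1 natrD.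
have E2 : (k.+2%:R : rat) = k%:R + 2 by rewrite -addn2 natrD.
rewrite -mulr_natl E1 E2; field; apply/andP; split => //.
Qed.


Definition E : rat := 10 * N ^+ 2 * (N - 1).
Lemma E_gt0 : 0 < E.
Proof. have := N_gt1; rewrite /E => H; apply: mulr_gt0; [apply: mulr_gt0|]; nra. Qed.
Lemma E_neq0 : E != 0.
Proof. by have := E_gt0; rewrite lt0r => /andP[]. Qed.

Definition A' (k : nat) : rat := 10 * k%:R * (N - k%:R) ^+ 2.
Definition B' (k : nat) : rat := 10 * k%:R * (k%:R - 1) * (N - k%:R).
Definition U' (k : nat) : rat := (N - k%:R) ^+ 2 * (N + 5 * k%:R).
Definition vv (k : nat) : rat := E * V n (n - k) k / fr k.

Lemma Rw0 k : (k <= n)%N -> Rw n k 0 = fr k / E * A' k.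
Proof.
move=> Hk; have HN := N_gt1.
have HN0 : N != 0 by apply/eqP; lra.
have HN1 : N - 1 != 0 by apply/eqP; lra.
have [H0 _] := @Nd_cl (n - k) k (subnKC Hk).
rewrite /Rw H0 /A' /E; field; rewrite HN0 HN1 //.
Qed.

Lemma Rw1 k : (k <= n)%N -> Rw n k 1 = fr k / E * B' k.
Proof.
move=> Hk; have HN := N_gt1.
have HN0 : N != 0 by apply/eqP; lra.
have HN1 : N - 1 != 0 by apply/eqP; lra.
have [_ H1] := @Nd_cl (n - k) k (subnKC Hk).
rewrite /Rw H1 /B' /E; field; rewrite HN0 HN1 //.
Qed.

Lemma Rw2 k y : (2 <= y)%N -> Rw n k y = 0.
Proof. by move=> Hy; rewrite /Rw Nd_ge2 // mul0r. Qed.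

Lemma V_ge0 d m : 0 <= V n d m.
Proof.
elim: d m => [//|d IH] m /=; apply: sumr_ge0 => y _.
by rewrite le_max IH orbT.
Qed.

Lemma V_vv k : V n (n - k) k = fr k / E * vv k.
Proof.
have H1 := fr_gt0 k; have H2 := E_neq0.
by rewrite /vv; field; rewrite H2 andbT (gt_eqF H1).
Qed.

Lemma vv_rec k : (2 <= k <= n)%N ->
  vv k.-1 = vv k + (Num.max (A' k - vv k) 0 + Num.max (B' k - vv k) 0) / k%:R.
Proof.
case: k => [|[|k]] // Hk.
have Hd : (n - k.+1 = (n - k.+2).+1)%N by lia.
rewrite /= {1}/vv Hd /= big_ord_recl big_ord_recl /=.
rewrite (eq_bigr (fun _ => V n (n - k.+2) k.+2)) => [|i _]; last first.
  by rewrite Rw2 // max_r // V_ge0.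
have Hk' : (k.+2 <= n)%N by lia.
rewrite sumr_const card_ord Rw0 // Rw1 // V_vv.
have Hc : 0 <= fr k.+2 / E by apply: divr_ge0; [apply: ltW; apply: fr_gt0 | apply: ltW; apply: E_gt0].
rewrite -!maxr_pMr // (max_split (A' _)) (max_split (B' _)) (frS k.+1) -[_ *+ k]mulr_natl.
have E2 : (k.+2%:R : rat) = k%:R + 2 by rewrite -addn2 natrD.
have H1 := fr_gt0 k.+2; have H2 := E_neq0.
have Hk0 : (0 : rat) <= k%:R by rewrite ler0n.
rewrite E2; field; rewrite H2 (gt_eqF H1) /= andbT; apply/eqP; lra.
Qed.

Lemma vv_n : vv n = 0.
Proof. by rewrite /vv subnn /= mulr0 mul0r. Qed.

End Spec.

Local Open Scope ring_scope.

Lemma natR (a b : nat) : (a <= b)%N -> (a%:R : rat) <= b%:R.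
Proof. by rewrite ler_nat. Qed.
Lemma SR (k : nat) : (k.+1%:R : rat) = k%:R + 1.
Proof. by rewrite -addn1 natrD. Qed.

Section Final.
Variable n : nat.
Hypothesis Hn : (2 <= n)%N.
Local Notation N := (n%:R : rat).
Definition K0 := (n.+1 %/ 3)%N.
Definition Kb := ((2 * n + 2) %/ 3)%N.

Lemma hK0 : (0 < K0)%N. Proof. rewrite /K0; lia. Qed.
Lemma hKb : (K0 <= Kb)%N. Proof. rewrite /K0 /Kb; lia. Qed.

Lemma hHa1 j : (0 < j)%N -> (j < K0)%N -> A' n j <= A' n j.+1.
Proof.
move=> H1 H2; have h : (3 * j + 2 <= n)%N by rewrite /K0 in H2; lia.
move/natR: h; rewrite natrD natrM => h.
move/natR: H1 => hj.
rewrite /A' SR.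
have h3 : 0 <= (N - j%:R - 1 - (2 * j%:R + 1)) * (N - j%:R - 1).
  by apply: mulr_ge0; lra.
nra.
Qed.

Lemma hHb1 j : (0 < j)%N -> (j < Kb)%N -> B' n j <= B' n j.+1.
Proof.
move=> H1 H2; have h : (3 * j + 1 <= 2 * n)%N by rewrite /Kb in H2; lia.
move/natR: h; rewrite natrD !natrM => h.
move/natR: H1 => hj.
rewrite /B' SR.
have h3 : 0 <= j%:R * (2 * N - 3 * j%:R - 1) by apply: mulr_ge0; lra.
nra.
Qed.

Lemma hHa2 k : (K0 <= k <= n)%N -> U' n k <= A' n k.
Proof.
move=> /andP[H1 H2]; have h : (n <= 5 * k)%N by rewrite /K0 in H1; lia.
move/natR: h; rewrite natrM => h.
rewrite /U' /A'.
have h3 : 0 <= (N - k%:R) ^+ 2 * (5 * k%:R - N) by apply: mulr_ge0; [apply: sqr_ge0|lra].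
nra.
Qed.

Lemma hHb2 k : (Kb <= k <= n)%N -> U' n k <= B' n k.
Proof.
move=> /andP[H1 H2]; have h : (2 * n <= 3 * k)%N by rewrite /Kb in H1; lia.
rewrite /U' /B'.
have [->|Hlt] := eqVneq k n; first by rewrite subrr expr0n /= mul0r mulr0.
have hk2 : (2 <= k)%N by lia.
have hkn : (k + 1 <= n)%N by lia.
move/natR: h; rewrite !natrM => h.
move/natR: hk2 => hk2.
move/natR: hkn; rewrite natrD => hkn.
set K := k%:R in h hk2 hkn *.
have i1 : 0 <= (K - 2 * (N - K)) * (K + 2 * (N - K)) by apply: mulr_ge0; lra.
have i2 : 0 <= K * (K - 2 * (N - K)) by apply: mulr_ge0; lra.
have i3 : 0 <= K * (27 * K - 40) by apply: mulr_ge0; lra.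
have inner : 0 <= 10 * K * (K - 1) - (N - K) * (N + 5 * K) by nra.
have := mulr_ge0 (_ : 0 <= N - K) inner.
move=> /(_ ltac:(lra)) H.
nra.
Qed.

Lemma helper (X Y Z K : rat) : 0 < K -> K * X + Y <= K * Z -> X + Y / K <= Z.
Proof.
move=> HK H; have : Y / K <= Z - X by rewrite ler_pdivrMr //; nra.
lra.
Qed.

Lemma hHsup k : (K0 < k <= n)%N ->
  U' n k + (Num.max (A' n k - U' n k) 0 + Num.max (B' n k - U' n k) 0) / k%:R
  <= U' n k.-1.
Proof.
move=> /andP[H1 H2].
have hA : U' n k <= A' n k by apply: hHa2; rewrite H2 andbT; lia.
have h : (n + 2 <= 3 * k)%N by rewrite /K0 in H1; lia.
have hk2 : (2 <= k)%N by have := hK0; lia.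
rewrite (max_l (_ : 0 <= A' n k - U' n k)); last by lra.
rewrite /U' predn_R; last by lia.
move/natR: h; rewrite natrD natrM => h.
move/natR: hk2 => hk2.
move/natR: H2 => hkn.
have HK : (0 : rat) < k%:R by lra.
apply: helper => //.
move: hA; rewrite /U' /A' /B'.
set K := k%:R in h hk2 hkn HK *.
move=> hA.
have q : 0 <= (3 * K - (N - K)) * (4 * K - (N - K)) - 9 * K.
  have : 0 <= (3 * K - (N - K) - (K + 2)) * (4 * K - (N - K)) by apply: mulr_ge0; lra.
  have : 0 <= (K + 2) * (4 * K - (N - K) - (2 * K + 2)) by apply: mulr_ge0; lra.
  nra.
have e2 : 0 <= (N - K) * ((3 * K - (N - K)) * (4 * K - (N - K)) - 9 * K) by apply: mulr_ge0; lra.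
have e3 : 0 <= K * (6 * K - 5) by apply: mulr_ge0; lra.
have e4 : 0 <= (N - K) * (2 * (N - K - K / 4) ^+ 2 + 15 / 8 * K ^+ 2).
  by apply: mulr_ge0; [lra | apply: addr_ge0; [apply: mulr_ge0; [lra|apply: sqr_ge0]|apply: mulr_ge0; [lra|apply: sqr_ge0]]].
have e5 : 0 <= K * (N - K) by apply: mulr_ge0; lra.
case: (lerP 0 (10 * K * (K - 1) * (N - K) - (N - K) ^+ 2 * (N + 5 * K))) => hB.
  nra.
nra.
Qed.

End Final.

Local Open Scope ring_scope.

Lemma hHab n k : (0 < k)%N -> (k < K0 n)%N -> B' n k <= A' n k.
Proof.
move=> H1 H2; have h : (3 * k + 2 <= n)%N by rewrite /K0 in H2; lia.
move/natR: h; rewrite natrD natrM => h.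
move/natR: H1 => hk.
rewrite /A' /B'.
have h3 : (0 : rat) <= (10 * k%:R * (n%:R - k%:R)) * (n%:R - 2 * k%:R + 1).
  by apply: mulr_ge0; [apply: mulr_ge0|]; lra.
nra.
Qed.

Lemma SC_exists n : exists r s, (r <= s <= n)%N /\ SC n r s.
Proof.
case: (leqP n 1) => Hn.
  exists 0%N, 0%N; split; first by [].
  move=> k y /andP[H1 H2] Hy.
  have Hk : k = n by lia.
  have Hn1 : n = 1%N by lia.
  subst k n.
  rewrite /Rw subnn /= divff ?oner_eq0 // subrr mulr0.
  by case: tdec.
have Hn2 : (2 <= n)%N by [].
have Un : 0 <= U' n n by rewrite /U' subrr expr0n /= mul0r.
have [r [s [Hrs Hc]]] := @partA n (K0 n) (Kb n) (A' n) (B' n) (U' n) (vv n)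
  (vv_rec Hn2) (vv_n n) (hK0 Hn2) (hKb Hn2) (hHa1 Hn2) (hHb1 Hn2) (hHa2 Hn2)
  (hHb2 Hn2) (hHsup Hn2) Un (@hHab n).
exists r, s; split => //.
move=> k y Hk Hy.
have Hkn : (k <= n)%N by case/andP: Hk.
have [C1 C2 C3 C4] := Hc k Hk.
have Hcpos : 0 < fr n k / E n by apply: divr_gt0; [apply: fr_gt0 | apply: E_gt0 Hn2].
rewrite (V_vv Hn2).
case: y Hy => [|[|y]] Hy.
- rewrite (Rw0 Hn2 Hkn) /tdec andbT /= andbT.
  have -> : ((r < k <= s)%N || (s < k)%N) = (r < k)%N.
    by case/andP: Hrs => H _; lia.
  case: ltnP => H.
    by rewrite ler_pM2l //; apply: C1.
  by rewrite ler_pM2l //; apply: C2.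
- rewrite (Rw1 Hn2 Hkn) /tdec andbF /= andbT.
  case: ltnP => H.
    by rewrite ler_pM2l //; apply: C3.
  by rewrite ler_pM2l //; apply: C4.
- rewrite (Rw2 Hn2) // /tdec andbF /= andbF.
  by rewrite -(V_vv Hn2) V_ge0.
Qed.

Local Close Scope ring_scope.
Unset Implicit Arguments.

Theorem theorem8 (n : nat) :
  exists r s : nat, (r <= s <= n)%N /\
    forall S : strategy,
      (expected_payoff n S <= expected_payoff n (threshold_strategy r s))%R.
Proof.
have [r [s [Hrs Hsc]]] := SC_exists n.
exists r, s; split => //.
exact: main_from_SC Hsc.
Qed.
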